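(* Let $(X,T)$ be a topological dynamical system and $\mu$ a $T$-invariant Borel probability measure on $X$. The following are equivalent: (1) $\mu$ has bounded complexity with respect to $\{\hat d_n\}$; (2) $T$ is $\mu$-equicontinuous in the mean; (3) $T$ is $\mu$-mean equicontinuous.
   Context: A t.d.s. $(X,T)$ consists of a compact metric space $(X,d)$ and a continuous map $T\colon X\to X$. Let $\bar d_n(x,y)=\frac1n\sum_{i=0}^{n-1}d(T^ix,T^iy)$, $\hat d_n(x,y)=\max\{\bar d_k(x,y)\colon1\le k\le n\}$, $B_{\hat d_n}(x,\varepsilon)=\{y\colon\hat d_n(x,y)<\varepsilon\}$, and $\widehat{\mathrm{span}}_\mu(n,\varepsilon)=\min\{\#(F)\colon F\subset X,\ \mu(\bigcup_{x\in F}B_{\hat d_n}(x,\varepsilon))>1-\varepsilon\}$. $\mu$ has bounded complexity with respect to $\{\hat d_n\}$ if for every $\varepsilon>0$ there is a positive integer $C$ with $\widehat{\mathrm{span}}_\mu(n,\varepsilon)\le C$ for all $n\ge1$. A set $K\subset X$ is equicontinuous in the mean if for every $\varepsilon>0$ there is $\delta>0$ with $\hat d_n(x,y)<\varepsilon$ for all $n\ge1$ and all $x,y\in K$ with $d(x,y)<\delta$; $K$ is mean equicontinuous if for every $\varepsilon>0$ there is $\delta>0$ with $\limsup_{n\to\infty}\bar d_n(x,y)<\varepsilon$ for all $x,y\in K$ with $d(x,y)<\delta$. $T$ is $\mu$-equicontinuous in the mean (resp. $\mu$-mean equicontinuous) if for every $\tau>0$ there is a measurable $K\subset X$ with $\mu(K)>1-\tau$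 which is equicontinuous in the mean (resp. mean equicontinuous). *)

(* Defs.v *)
From Stdlib Require List.
From HB Require Import structures.
From mathcomp Require Import all_boot all_order all_algebra.
From mathcomp Require Import all_classical all_reals all_analysis.
Set Implicit Arguments. Unset Strict Implicit. Unset Printing Implicit Defensive.
Import Order.TTheory GRing.Theory Num.Theory.
Local Open Scope classical_set_scope.
Local Open Scope ring_scope.

Section Defs.
Variables (R : realType) (X : Type) (d : X -> X -> R).

Definition is_metric : Prop :=
  [/\ (forall x y, 0 <= d x y),
      (forall x y, d x y = 0 <-> x = y),
      (forall x y, d x y = d y x) &
      (forall x y z, d x z <= d x y + d y z)].

Definition d_open (U : set X) : Prop :=
  forall x, U x -> exists2 r : R, 0 < r & (forall y, d x y < r -> U y).

Definition d_compact : Prop :=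
  forall (I : Type) (U : I -> set X),
    (forall i, d_open (U i)) -> (forall x, exists i, U i x) ->
    exists s : list I, forall x, exists i, List.In i s /\ U i x.

Definition d_continuous (T : X -> X) : Prop :=
  forall x (e : R), 0 < e -> exists2 r : R, 0 < r &
    (forall y, d x y < r -> d (T x) (T y) < e).

Variable T : X -> X.

Definition dbar (n : nat) (x y : X) : R :=
  n%:R^-1 * \sum_(i < n) d (iter i T x) (iter i T y).

Definition dhat (n : nat) (x y : X) : R :=
  \big[Num.max/0]_(1 <= k < n.+1) dbar k x y.

Definition Bhat (n : nat) (x : X) (eps : R) : set X :=
  [set y | dhat n x y < eps].

End Defs.

Section Measure.
Context {R : realType} {dX : measure_display} {X : measurableType dX}.
Variables (d : X -> X -> R) (T : X -> X) (mu : probability X R).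

Definition span_ok (n : nat) (eps : R) (k : nat) : Prop :=
  exists F : list X, size F = k /\
    (mu [set y | exists x, List.In x F /\ Bhat d T n x eps y] > (1 - eps)%:E)%E.

Lemma span_ok_ex n eps :
  (exists k, span_ok n eps k) -> exists k, `[< span_ok n eps k >].
Proof. by move=> [k hk]; exists k; apply/asboolP. Qed.

(* \hat{span}_mu(n,eps) = min #F (0 if no such F, which never happens) *)
Definition spanhat (n : nat) (eps : R) : nat :=
  match pselect (exists k, span_ok n eps k) with
  | left h => ex_minn (span_ok_ex h)
  | right _ => 0%N
  end.

Definition bounded_complexity : Prop :=
  forall eps : R, 0 < eps -> exists C : nat, (0 < C)%N /\
    forall n : nat, (1 <= n)%N -> (spanhat n eps <= C)%N.

Definition equicontinuous_in_mean (K : set X) : Prop :=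
  forall eps : R, 0 < eps -> exists2 delta : R, 0 < delta &
    forall n x y, (1 <= n)%N -> K x -> K y -> d x y < delta ->
      dhat d T n x y < eps.

Definition mean_equicontinuous (K : set X) : Prop :=
  forall eps : R, 0 < eps -> exists2 delta : R, 0 < delta &
    forall x y, K x -> K y -> d x y < delta ->
      (limn_esup (fun n => (dbar d T n x y)%:E) < eps%:E)%E.

Definition mu_equicontinuous_in_mean : Prop :=
  forall tau : R, 0 < tau -> exists K : set X,
    [/\ measurable K, (mu K > (1 - tau)%:E)%E & equicontinuous_in_mean K].

Definition mu_mean_equicontinuous : Prop :=
  forall tau : R, 0 < tau -> exists K : set X,
    [/\ measurable K, (mu K > (1 - tau)%:E)%E & mean_equicontinuous K].

End Measure.

(* Main.v *)
Require Import Defs.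
From HB Require Import structures.
From mathcomp Require Import all_boot all_order all_algebra.
From mathcomp Require Import all_classical all_reals all_analysis.
Import Order.TTheory GRing.Theory Num.Theory.
Local Open Scope classical_set_scope.
Local Open Scope ring_scope.
From mathcomp Require Import lra.
Section Esup.
Context {R : realType}.
Local Open Scope ereal_scope.

Lemma esup_le (u : (\bar R)^nat) N c : (forall n, (N <= n)%N -> u n <= c) -> limn_esup u <= c.
Proof.
move=> h; rewrite limn_esup_lim; apply: lime_le; first exact: is_cvg_esups.
exists N => // n /= Nn; apply/ereal_supP => _ [k /= nk <-]; apply: h.
exact: leq_trans Nn nk.
Qed.

Lemma esup_lt (u : (\bar R)^nat) c : limn_esup u < c -> exists N, forall n, (N <= n)%N -> u n < c.
Proof.
rewrite limn_esup_lim (cvg_lim _ (@cvg_esups_inf R u)) //.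
move=> /ereal_inf_lt [_ [N _ <-] hN]; exists N => n Nn; apply: le_lt_trans hN.
by apply: ereal_sup_ubound; exists n.
Qed.
End Esup.

Section Meas.
Context {R : realType} {dX : measure_display} {X : measurableType dX}.
Variable (mu : probability X R).

Definition pr (A : set X) : R := fine (mu A).

Lemma prE {A : set X} : measurable A -> mu A = (pr A)%:E.
Proof.
move=> mA; rewrite /pr fineK // ge0_fin_numE ?measure_ge0 //.
exact: (le_lt_trans (probability_le1 _ mA)) (ltry _).
Qed.

Lemma pr_ge0 A : 0 <= pr A.
Proof. by rewrite /pr fine_ge0 ?measure_ge0. Qed.

Lemma pr_le1 {A : set X} : measurable A -> pr A <= 1.
Proof. by move=> mA; rewrite -lee_fin -prE // probability_le1. Qed.

Lemma prT : pr setT = 1.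
Proof. by rewrite /pr probability_setT. Qed.

Lemma pr0 : pr set0 = 0.
Proof. by rewrite /pr measure0. Qed.

Lemma pr_disjU {A B : set X} : measurable A -> measurable B -> A `&` B = set0 ->
  pr (A `|` B) = pr A + pr B.
Proof.
move=> mA mB AB; apply: EFin_inj; rewrite -prE ?measurableU //.

- by rewrite measureU // EFinD -!prE.
- exact: measurableU.
Qed.

Lemma pr_U {A B : set X} : measurable A -> measurable B -> pr (A `|` B) <= pr A + pr B.
Proof.
move=> mA mB; rewrite -lee_fin EFinD -!prE ?measurableU //. - exact: (measureU2 mu mA mB).
- exact: measurableU.
Qed.

Lemma pr_mono {A B : set X} : measurable A -> measurable B -> A `<=` B -> pr A <= pr B.
Proof. by move=> mA mB AB; rewrite -lee_fin -!prE // le_measure // inE. Qed.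

Lemma pr_setC {A : set X} : measurable A -> pr (~` A) = 1 - pr A.
Proof.
move=> mA; have := pr_disjU mA (measurableC mA) (setICr A).
rewrite setUCr prT => ->; lra.
Qed.

Lemma pr_setD {A B : set X} : measurable A -> measurable B -> pr A - pr B <= pr (A `\` B).
Proof.
move=> mA mB; have : A `<=` (A `\` B) `|` B by move=> x Ax; case: (pselect (B x)); [right|left].
have mABB : measurable ((A `\` B) `|` B) by apply: measurableU => //; exact: measurableD.
move=> /(pr_mono mA mABB).
move: (pr_U (measurableD mA mB) mB); lra.
Qed.

Lemma pr_incr (F : nat -> set X) : (forall n, measurable (F n)) ->
  (forall n m, (n <= m)%N -> F n `<=` F m) ->
  forall b, 0 < b -> exists N, pr (\bigcup_n F n) < pr (F N) + b.
Proof.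
move=> mF hF b b0.
have mU : measurable (\bigcup_n F n) by exact: bigcupT_measurable.
have : (mu \o F) x @[x --> \oo] --> (pr (\bigcup_n F n))%:E.
  rewrite -prE //; apply: nondecreasing_cvg_mu => // n m nm; apply/subsetPset; exact: hF.
move=> /fine_cvgP [_] /cvgrPdist_lt /(_ b b0) [N _ hN].
exists N; have := hN N (leqnn N); rewrite /= /pr.
move=> h; have := ler_norm (fine (mu (\bigcup_n F n)) - fine (mu (F N))); lra.
Qed.

Lemma pr_decr (F : nat -> set X) : (forall n, measurable (F n)) ->
  (forall n m, (n <= m)%N -> F m `<=` F n) ->
  forall b, 0 < b -> exists N, pr (F N) < pr (\bigcap_n F n) + b.
Proof.
move=> mF hF b b0.
have mI : measurable (\bigcap_n F n) by exact: bigcapT_measurable.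
have finF0 : (mu (F 0%N) < +oo)%E by rewrite prE // ltry.
have : (mu \o F) x @[x --> \oo] --> (pr (\bigcap_n F n))%:E.
  rewrite -prE //; apply: nonincreasing_cvg_mu => // n m nm; apply/subsetPset; exact: hF.
move=> /fine_cvgP [_] /cvgrPdist_lt /(_ b b0) [N _ hN].
exists N; have := hN N (leqnn N); rewrite /= /pr.
rewrite distrC => h; have := ler_norm (fine (mu (F N)) - fine (mu (\bigcap_n F n))); lra.
Qed.

End Meas.
Section Main.
Context {R : realType} {dX : measure_display} {X : measurableType dX}.
Variables (d : X -> X -> R) (T : X -> X) (mu : probability X R).
Hypothesis dmet : is_metric d.

Local Notation db := (dbar d T).
Local Notation dh := (dhat d T).

Lemma d_ge0 x y : 0 <= d x y. Proof. by case: dmet. Qed.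
Lemma d_xx x : d x x = 0. Proof. by case: dmet => _ h _ _; apply/h. Qed.
Lemma d_sym x y : d x y = d y x. Proof. by case: dmet. Qed.
Lemma d_tri x y z : d x z <= d x y + d y z. Proof. by case: dmet. Qed.

Lemma db_ge0 n x y : 0 <= db n x y.
Proof. by rewrite /dbar mulr_ge0 ?invr_ge0 // sumr_ge0 // => i _; exact: d_ge0. Qed.

Lemma db_sym n x y : db n x y = db n y x.
Proof. by rewrite /dbar; congr (_ * _); apply: eq_bigr => i _; rewrite d_sym. Qed.

Lemma db_tri n x y z : db n x z <= db n x y + db n y z.
Proof.
rewrite /dbar -mulrDr ler_wpM2l ?invr_ge0 // -big_split /=.
by apply: ler_sum => i _; exact: d_tri.
Qed.

Lemma db_lt n x y e : (0 < n)%N -> (forall i, (i < n)%N -> d (iter i T x) (iter i T y) < e) ->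
  db n x y < e.
Proof.
move=> n0 h; rewrite /dbar ltr_pdivrMl ?ltr0n //.
have -> : n%:R * e = \sum_(i < n) e by rewrite sumr_const card_ord mulr_natl.
apply: ltr_sum => [|i _]; last exact: h.
by apply/hasP; exists (Ordinal n0); rewrite ?mem_index_enum.
Qed.

Lemma dh_ge0 n x y : 0 <= dh n x y.
Proof.
rewrite /dhat; elim: (index_iota 1 n.+1) => [|a s ih]; first by rewrite big_nil.
by rewrite big_cons le_max ih orbT.
Qed.

Lemma le_dh n k x y : (1 <= k <= n)%N -> db k x y <= dh n x y.
Proof.
move=> hk; rewrite /dhat; apply: (le_bigmax_seq _ k) => //.
by rewrite mem_index_iota ltnS.
Qed.

Lemma dh_le n x y e : 0 <= e -> (forall k, (1 <= k <= n)%N -> db k x y <= e) -> dh n x y <= e.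
Proof.
move=> e0 h; rewrite /dhat big_seq_cond; apply: bigmax_le => // k /andP[+ _].
by rewrite mem_index_iota ltnS => hk; exact: h.
Qed.

Lemma dh_lt n x y e : 0 < e -> (forall k, (1 <= k <= n)%N -> db k x y < e) -> dh n x y < e.
Proof.
move=> e0 h; rewrite /dhat big_seq_cond; apply: bigmax_lt => // k /andP[+ _].
by rewrite mem_index_iota ltnS => hk; exact: h.
Qed.

Lemma dh_sym n x y : dh n x y = dh n y x.
Proof. by rewrite /dhat; apply: eq_bigr => k _; rewrite db_sym. Qed.

Lemma dh_tri n x y z : dh n x z <= dh n x y + dh n y z.
Proof.
apply: dh_le => [|k hk]; first by rewrite addr_ge0 ?dh_ge0.
by rewrite (le_trans (db_tri k x y z)) // lerD ?le_dh.
Qed.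

Lemma dh_mono n m x y : (n <= m)%N -> dh n x y <= dh m x y.
Proof.
move=> nm; apply: dh_le => [|k /andP[k1 kn]]; first exact: dh_ge0.
by apply: le_dh; rewrite k1 (leq_trans kn nm).
Qed.

Lemma dh_lt_db n k x y e : dh n x y < e -> (1 <= k <= n)%N -> db k x y < e.
Proof. by move=> h hk; apply: le_lt_trans h; exact: le_dh. Qed.

Lemma dh_bound n x y e : 0 < e -> (forall i, (i < n)%N -> d (iter i T x) (iter i T y) < e) ->
  dh n x y < e.
Proof.
move=> e0 h; apply: dh_lt => // k /andP[k1 kn]; apply: db_lt => // i ik.
by apply: h; exact: leq_trans ik kn.
Qed.

Lemma dh_xx n x : dh n x x = 0.
Proof.
apply/eqP; rewrite eq_le dh_ge0 andbT; apply: dh_le => // k _.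
by rewrite /dbar big1 ?mulr0 // => i _; rewrite d_xx.
Qed.

Hypothesis dcomp : d_compact d.
Hypothesis Tcont : d_continuous d T.
Hypothesis meas_eq : @measurable _ X = <<s d_open d >>.

Local Notation P := (pr mu).

Definition dball x r := [set y | d x y < r].
Definition d_closed (C : set X) := d_open d (~` C).
Definition fcont (f : X -> R) := forall x e, 0 < e -> exists2 r, 0 < r &
  forall y, d x y < r -> `|f x - f y| < e.

Lemma open_meas {U : set X} : d_open d U -> measurable U.
Proof. by rewrite meas_eq => h; apply: sub_gen_smallest. Qed.

Lemma closed_meas {C : set X} : d_closed C -> measurable C.
Proof. by move=> /open_meas /measurableC; rewrite setCK. Qed.

Lemma dball_open x r : d_open d (dball x r).
Proof.
move=> y /= hy; exists (r - d x y); first by rewrite subr_gt0.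
move=> z hz; have := d_tri x y z; rewrite /dball /=; lra.
Qed.

Lemma fcont_lt_open f a : fcont f -> d_open d [set y | f y < a].
Proof.
move=> hf y /= hy; have [r r0 hr] := hf y (a - f y) ltac:(by rewrite subr_gt0).
exists r => // z /hr h; have := ler_norm (f y - f z); rewrite distrC in h.
have := ler_norm (f z - f y); lra.
Qed.

Lemma fcont_gt_open f a : fcont f -> d_open d [set y | a < f y].
Proof.
move=> hf y /= hy; have [r r0 hr] := hf y (f y - a) ltac:(by rewrite subr_gt0).
exists r => // z /hr h; have := ler_norm (f y - f z); lra.
Qed.

Lemma fcont_le_closed f a : fcont f -> d_closed [set y | f y <= a].
Proof.
move=> hf; rewrite /d_closed.
have -> : ~` [set y | f y <= a] = [set y | a < f y].
  by apply/seteqP; split => y /=; rewrite ltNge => /negP.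
exact: fcont_gt_open.
Qed.

Lemma closed_bigcap (I : Type) (C : I -> set X) : (forall i, d_closed (C i)) ->
  d_closed (\bigcap_i C i).
Proof.
move=> hC y /=; rewrite -existsNE => -[i /= Ci].
have : (~` C i) y by move=> c; apply: Ci.
move=> /(hC i) [r r0 hr]; exists r => // z /hr nz.
by rewrite -existsNE; exists i => c; apply: nz; apply: c.
Qed.

Lemma open_setI U V : d_open d U -> d_open d V -> d_open d (U `&` V).
Proof.
move=> hU hV y [Uy Vy]; have [r1 r10 h1] := hU y Uy; have [r2 r20 h2] := hV y Vy.
exists (Num.min r1 r2); first by rewrite lt_min r10 r20.
by move=> z; rewrite lt_min => /andP[z1 z2]; split; [exact: h1|exact: h2].
Qed.

Lemma open_bigcup (I : Type) (U : I -> set X) : (forall i, d_open d (U i)) ->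
  d_open d (\bigcup_i U i).
Proof.
move=> hU y [i _ Uy]; have [r r0 hr] := hU i y Uy.
by exists r => // z /hr; exists i.
Qed.

Lemma iter_cont i x e : 0 < e -> exists2 r, 0 < r &
  forall y, d x y < r -> d (iter i T x) (iter i T y) < e.
Proof.
elim: i x e => [|i ih] x e e0; first by exists e.
have [r1 r10 h1] := Tcont (iter i T x) e e0.
have [r r0 hr] := ih x r1 r10.
by exists r => // y /hr /h1.
Qed.

Lemma iters_cont n x e : 0 < e -> exists2 r, 0 < r &
  forall y, d x y < r -> forall i, (i < n)%N -> d (iter i T x) (iter i T y) < e.
Proof.
elim: n => [|n ih] e0; first by exists 1.
have [r1 r10 h1] := ih e0.
have [r2 r20 h2] := iter_cont n x e e0.
exists (Num.min r1 r2); first by rewrite lt_min r10 r20.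
move=> y; rewrite lt_min => /andP[y1 y2] i; rewrite ltnS leq_eqVlt => /orP[/eqP->|].
  exact: h2.
exact: h1.
Qed.

Lemma dh_cont n x : fcont (dh n x).
Proof.
move=> y0 e e0; have [r r0 hr] := iters_cont n y0 e e0.
exists r => // y /hr h; have := dh_bound n y0 y e e0 h.
have := dh_tri n x y0 y; have := dh_tri n x y y0; rewrite (dh_sym n y y0).
move=> h1 h2 h3; rewrite ltr_norml; apply/andP; split; lra.
Qed.

Lemma db_cont n x : fcont (db n x).
Proof.
move=> y0 e e0; have [r r0 hr] := iters_cont n y0 e e0.
exists r => // y /hr h.
have hb : db n y0 y < e.
  case: (posnP n) => [n0|n0]; last exact: db_lt.
  by rewrite /dbar n0 big_ord0 mulr0.
have := db_tri n x y0 y; have := db_tri n x y y0; rewrite (db_sym n y y0).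
move=> h1 h2; rewrite ltr_norml; apply/andP; split; lra.
Qed.

Lemma Bhat_open n x e : d_open d (Bhat d T n x e).
Proof. exact: fcont_lt_open (dh_cont n x). Qed.

Lemma list_min (I : Type) (s : list I) (g : I -> R) :
  exists2 m, 0 < m & forall i, List.In i s -> 0 < g i -> m <= g i.
Proof.
elim: s => [|a s [m m0 hm]]; first by exists 1.
case: (ltP 0 (g a)) => ga.
  exists (Num.min m (g a)); first by rewrite lt_min m0 ga.
  move=> i [<-|/hm h] gi; first by rewrite ge_min lexx orbT.
  by rewrite ge_min h.
exists m => // i [<- gi|/hm //]; lra.
Qed.

Lemma finite_net r : 0 < r -> exists s : list X, forall y, exists c, List.In c s /\ d c y < r.
Proof.
move=> r0; have := @dcomp X (fun x => dball x r) (fun x => dball_open x r).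
case=> [x|s hs]; first by exists x; rewrite /dball /= d_xx.
by exists s.
Qed.

Lemma iters_ucont n e : 0 < e -> exists2 r, 0 < r &
  forall y y', d y y' < r -> forall i, (i < n)%N -> d (iter i T y) (iter i T y') < e.
Proof.
move=> e0; have e20 : 0 < e / 2 by rewrite divr_gt0.
pose good (p : X * R) := 0 < p.2 /\ forall y, d p.1 y < p.2 -> forall i, (i < n)%N ->
  d (iter i T p.1) (iter i T y) < e / 2.
pose U (p : X * R) := [set y | good p /\ d p.1 y < p.2 / 2].
have Uo p : d_open d (U p).
  move=> y [gp hy]; exists (p.2 / 2 - d p.1 y); first by rewrite subr_gt0.
  move=> z hz; split => //; have := d_tri p.1 y z; rewrite /=; lra.
have [x|s hs] := @dcomp (X * R)%type U Uo.
  have [r r0 hr] := iters_cont n x (e/2) e20; exists (x, r); split; first by split.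
  by rewrite /= d_xx divr_gt0.
have [m m0 hm] := @list_min _ s (fun p => p.2 / 2).
exists m => // y y' yy' i ni.
have [p [ps [[p0 gp] py]]] := hs y.
have hm' := hm p ps (divr_gt0 p0 (ltr0Sn _ 1)).
have h1 := gp y ltac:(rewrite /=; lra) i ni.
have h2 := gp y' ltac:(have := d_tri p.1 y y'; rewrite /=; lra) i ni.
have := d_tri (iter i T y) (iter i T p.1) (iter i T y'); rewrite d_sym in h1; lra.
Qed.
Lemma measU {A B : set X} : measurable A -> measurable B -> measurable (A `|` B).
Proof. exact: measurableU. Qed.

Definition shell (C : set X) (eta : R) := [set y | ~ C y /\ exists z, C z /\ d z y < eta].

Lemma shell_open C eta : d_closed C -> d_open d (shell C eta).
Proof.
move=> hC y [nCy [z [Cz zy]]].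
have [r1 r10 h1] := hC y nCy.
exists (Num.min r1 (eta - d z y)); first by rewrite lt_min r10 subr_gt0.
move=> w; rewrite lt_min => /andP[w1 w2]; split; first exact: h1.
exists z; split => //; have := d_tri z y w; lra.
Qed.

Lemma shell_mono C e1 e2 : e1 <= e2 -> shell C e1 `<=` shell C e2.
Proof. by move=> le y [nC [z [Cz h]]]; split => //; exists z; split => //; lra. Qed.

Lemma inv_nat_mono n m : (n <= m)%N -> m.+1%:R^-1 <= n.+1%:R^-1 :> R.
Proof. by move=> nm; rewrite lef_pV2 ?posrE ?ltr0Sn // ler_nat ltnS. Qed.

Lemma shell_small C b : d_closed C -> 0 < b -> exists2 eta, 0 < eta & P (shell C eta) < b.
Proof.
move=> hC b0; pose F k := shell C (k.+1%:R^-1).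
have mF k : measurable (F k) by apply: open_meas; exact: shell_open.
have hF : forall n m, (n <= m)%N -> F m `<=` F n.
  by move=> n m nm; apply: shell_mono; exact: inv_nat_mono.
have [N hN] := pr_decr mu F mF hF b b0.
exists N.+1%:R^-1; first by rewrite invr_gt0 ltr0Sn.
suff eI : \bigcap_n F n = set0 by move: hN; rewrite eI pr0 add0r.
apply/seteqP; split => // y /= hy; have [nCy _] := hy 0%N I.
have [r r0 hr] := hC y nCy.
have [k hk] := ltr_add_invr r0; rewrite add0r in hk.
have [_ [z [Cz zy]]] := hy k I.
by apply: (hr z) => //; rewrite d_sym; exact: lt_trans zy hk.
Qed.

Definition badset (Cs : list (set X)) eta :=
  [set y | exists C, List.In C Cs /\ shell C eta y].

Lemma badset_open Cs eta : (forall C, List.In C Cs -> d_closed C) -> d_open d (badset Cs eta).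
Proof.
move=> hCs y [C [CCs hy]]; have [r r0 hr] := shell_open C eta (hCs C CCs) y hy.
by exists r => // z /hr hz; exists C.
Qed.

Lemma badset_small Cs b : (forall C, List.In C Cs -> d_closed C) -> 0 < b ->
  exists2 eta, 0 < eta & P (badset Cs eta) < b.
Proof.
elim: Cs b => [|C Cs ih] b hCs b0.
  exists 1 => //; suff -> : badset [::] 1 = set0 by rewrite pr0.
  by apply/seteqP; split => // y [C []].
have b20 : 0 < b / 2 by rewrite divr_gt0.
have [e1 e10 h1] := shell_small C (b / 2) (hCs C (or_introl erefl)) b20.
have [e2 e20 h2] := ih (b / 2) (fun C' h => hCs C' (or_intror h)) b20.
exists (Num.min e1 e2); first by rewrite lt_min e10 e20.
have sub : badset (C :: Cs) (Num.min e1 e2) `<=` shell C e1 `|` badset Cs e2.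
  move=> y [C' [[<-|hC'] hy]]; first by left; apply: shell_mono hy; rewrite ge_min lexx.
  by right; exists C'; split => //; apply: shell_mono hy; rewrite ge_min lexx orbT.
have m1 : measurable (shell C e1) by apply: open_meas; apply: shell_open; apply: hCs; left.
have m2 : measurable (badset Cs e2).
  by apply: open_meas; apply: badset_open => C' h; apply: hCs; right.
have m3 : measurable (badset (C :: Cs) (Num.min e1 e2)) by apply: open_meas; exact: badset_open.
have := pr_mono mu m3 (measU m1 m2) sub; have := pr_U mu m1 m2; lra.
Qed.

Definition good e (L : set X) := exists2 delta, 0 < delta &
  forall n x y, (1 <= n)%N -> L x -> L y -> d x y < delta -> dh n x y < e.

Definition pergood (L : set X) e (C : set X) := forall b, 0 < b -> exists G,
  [/\ measurable G, P (L `&` C `\` G) < b & exists2 delta, 0 < delta &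
    forall n y y', (1 <= n)%N -> L y -> L y' -> C y -> C y' -> G y -> G y' ->
      d y y' < delta -> dh n y y' < e].

Lemma AL1 (L : set X) e Cs : measurable L -> (forall C, List.In C Cs -> d_closed C) ->
  (forall C, List.In C Cs -> pergood L e C) ->
  forall b, 0 < b -> exists G, [/\ measurable G, P (L `\` G) < b & exists2 delta, 0 < delta &
    forall C, List.In C Cs -> forall n y y', (1 <= n)%N -> L y -> L y' -> C y -> C y' ->
      G y -> G y' -> d y y' < delta -> dh n y y' < e].
Proof.
move=> mL; elim: Cs => [|C Cs ih] hCs hpg b b0.
  exists setT; split => //; first by rewrite setDT pr0.
  by exists 1 => // C [].
have b20 : 0 < b / 2 by rewrite divr_gt0.
have mC : measurable C by apply: closed_meas; apply: hCs; left.
have [GC [mGC hGC [d1 d10 hd1]]] := hpg C (or_introl erefl) _ b20.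
have [G' [mG' hG' [d2 d20 hd2]]] := ih (fun C' h => hCs C' (or_intror h))
  (fun C' h => hpg C' (or_intror h)) _ b20.
exists ((~` C `|` GC) `&` G'); split.
- by apply: measurableI => //; apply: measurableU => //; exact: measurableC.
- have sub : L `\` ((~` C `|` GC) `&` G') `<=` (L `&` C `\` GC) `|` (L `\` G').
    move=> y [Ly hy]; case: (pselect (G' y)) => hG'y; last by right.
    left; split; last by move=> h; apply: hy; split => //; right.
    split => //; apply: contrapT => nC; apply: hy; split => //; left; exact: nC.
  have m1 : measurable (L `&` C `\` GC) by apply: measurableD => //; exact: measurableI.
  have m2 : measurable (L `\` G') by exact: measurableD.
  have m3 : measurable (L `\` ((~` C `|` GC) `&` G')).
    apply: measurableD => //; apply: measurableI => //; apply: measurableU => //.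
    exact: measurableC.
  have := pr_mono mu m3 (measU m1 m2) sub; have := pr_U mu m1 m2; lra.
- exists (Num.min d1 d2); first by rewrite lt_min d10 d20.
  move=> C' [<-|hC'] n y y' n1 Ly Ly' Cy Cy' [hy G'y] [hy' G'y']; rewrite lt_min => /andP[yy1 yy2].
    apply: hd1 => //; first by case: hy.
    by case: hy'.
  exact: (hd2 C').
Qed.

Lemma AL (L : set X) e Cs b : measurable L -> (forall C, List.In C Cs -> d_closed C) ->
  (forall y, L y -> exists C, List.In C Cs /\ C y) ->
  (forall C, List.In C Cs -> pergood L e C) -> 0 < b ->
  exists L', [/\ measurable L', L' `<=` L, P L - b < P L' & good e L'].
Proof.
move=> mL hCs hcov hpg b0.
have b20 : 0 < b / 2 by rewrite divr_gt0.
have [G [mG hG [dl dl0 hdl]]] := @AL1 L e Cs mL hCs hpg _ b20.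
have [eta eta0 heta] := @badset_small Cs (b / 2) hCs b20.
have mB : measurable (badset Cs eta) by apply: open_meas; exact: badset_open.
exists (L `&` G `\` badset Cs eta); split.
- by apply: measurableD => //; exact: measurableI.
- by move=> y [[]].
- have sub : L `<=` (L `&` G `\` badset Cs eta) `|` ((L `\` G) `|` badset Cs eta).
    move=> y Ly; case: (pselect (G y)) => Gy; last by right; left.
    case: (pselect (badset Cs eta y)) => By; [by right; right | by left].
  have m1 : measurable (L `&` G `\` badset Cs eta) by apply: measurableD => //; exact: measurableI.
  have m2 : measurable (L `\` G) by exact: measurableD.
  have := pr_mono mu mL (measU m1 (measU m2 mB)) sub.
  have := pr_U mu m1 (measU m2 mB); have := pr_U mu m2 mB; lra.
- exists (Num.min dl eta); first by rewrite lt_min dl0 eta0.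
  move=> n y y' n1 [[Ly Gy] By] [[Ly' Gy'] By']; rewrite lt_min => /andP[yy1 yy2].
  have [C [CCs Cy]] := hcov y Ly.
  have Cy' : C y'.
    apply: contrapT => nC; apply: By'; exists C; split => //; split => //.
    by exists y.
  exact: (hdl C).
Qed.
Lemma good_sub e (A B : set X) : A `<=` B -> good e B -> good e A.
Proof. by move=> AB [dl dl0 h]; exists dl => // n x y n1 /AB Ax /AB By; exact: h. Qed.

Lemma nest (K0 : set X) tau : measurable K0 -> 1 - tau < P K0 ->
  (forall L, measurable L -> L `<=` K0 -> forall e b, 0 < e -> 0 < b ->
     exists L', [/\ measurable L', L' `<=` L, P L - b < P L' & good e L']) ->
  exists K, [/\ measurable K, (mu K > (1 - tau)%:E)%E & equicontinuous_in_mean d T K].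
Proof.
move=> mK0 hK0 hstep.
set g := P K0 - (1 - tau).
have g0 : 0 < g by rewrite /g subr_gt0.
pose c (k : nat) : R := (2^-1) ^+ k.
have c0 k : 0 < c k by rewrite /c exprn_gt0 // invr_gt0.
have c1 k : c k <= 1 by apply: exprn_ile1; rewrite ?invr_ge0 // invf_le1 //; lra.
have cS k : c k.+1 = c k / 2 by rewrite /c exprS mulrC.
have : forall p : set X * nat, exists L' : set X, measurable p.1 -> p.1 `<=` K0 ->
    [/\ measurable L', L' `<=` p.1, P p.1 - g * c p.2 / 4 < P L' & good p.2.+1%:R^-1 L'].
  move=> [L k] /=; case: (pselect (measurable L /\ L `<=` K0)) => [[mL LK]|h].
    have [||L' hL'] := hstep L mL LK (k.+1%:R^-1) (g * c k / 4).
    - by rewrite invr_gt0 ltr0Sn.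
    - by rewrite divr_gt0 // mulr_gt0.
    by exists L'.
  by exists L => mL LK; exfalso; apply: h.
move=> /choice [f hf].
pose K := fix K k := if k is k'.+1 then f (K k', k') else K0.
have hK : forall k, [/\ measurable (K k), K k `<=` K0 & P K0 - P (K k) <= g / 2 * (1 - c k)].
  elim => [|k [mk kK0 hk]] /=; first by split => //; rewrite /c expr0 !subrr mulr0.
  have [mk' k'sub hk' _] := hf (K k, k) mk kK0.
  split => //; first by move=> x /k'sub /kK0.
  move: hk'; rewrite /= cS; lra.
have Kdec : forall n m, (n <= m)%N -> K m `<=` K n.
  move=> n m /subnK <-; elim: (m - n)%N => [|j ih] //=.
  have [mk kK0 _] := hK (j + n)%N.
  by have [_ sub _ _] := hf (K (j + n)%N, (j + n)%N) mk kK0 => x /sub /ih.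
have mK k : measurable (K k) by case: (hK k).
exists (\bigcap_k K k); split.
- exact: bigcapT_measurable.
- rewrite prE; last exact: bigcapT_measurable.
  rewrite lte_fin; have g20 : 0 < g / 2 by rewrite divr_gt0.
  have [N hN] := pr_decr mu K mK Kdec _ g20.
  have [_ _ hKN] := hK N; have := c1 N; have := c0 N.
  move: hKN hN; rewrite /g; nra.
- move=> eps eps0; have [k hk] := ltr_add_invr eps0; rewrite add0r in hk.
  have [mk kK0 _] := hK k; have [_ _ _ [dl dl0 hdl]] := hf (K k, k) mk kK0.
  exists dl => // n x y n1 Kx Ky xy.
  apply: lt_trans (hk); apply: (hdl n x y n1 _ _ xy).
  + exact: (Kx k.+1 I).
  + exact: (Ky k.+1 I).
Qed.
Lemma two_three : mu_equicontinuous_in_mean d T mu -> mu_mean_equicontinuous d T mu.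
Proof.
move=> h tau tau0; have [K [mK hK heq]] := h tau tau0; exists K; split => // eps eps0.
have eps20 : 0 < eps / 2 by rewrite divr_gt0.
have [dl dl0 hdl] := heq (eps / 2) eps20.
exists dl => // x y Kx Ky xy.
apply: (le_lt_trans (@esup_le _ _ 1%N (eps / 2)%:E _)).
  move=> n n1; rewrite lee_fin; apply: le_trans (ltW (hdl n x y n1 Kx Ky xy)).
  by apply: le_dh; rewrite n1 leqnn.
rewrite lte_fin; lra.
Qed.

Lemma in_pmap (g : X -> option X) (s : list X) c x :
  List.In c s -> g c = Some x -> List.In x (pmap g s).
Proof.
elim: s => [|a s ih] //= [<-|hc] gc; first by rewrite gc /=; left.
by case: (g a) => [y|] /=; [right|]; apply: ih.
Qed.

Lemma Uopen n eps (F : list X) :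
  d_open d [set y | exists x, List.In x F /\ Bhat d T n x eps y].
Proof.
move=> y [x [xF hy]]; have [r r0 hr] := Bhat_open n x eps y hy.
by exists r => // z /hr hz; exists x.
Qed.

Lemma spanhat_le n eps k : span_ok d T mu n eps k -> (spanhat d T mu n eps <= k)%N.
Proof.
move=> hk; rewrite /spanhat; case: pselect => // h.
case: ex_minnP => m _ hmin; apply: hmin; exact/asboolP.
Qed.

Lemma two_one : mu_equicontinuous_in_mean d T mu -> bounded_complexity d T mu.
Proof.
move=> h eps eps0; have [K [mK hK heq]] := h eps eps0; have [dl dl0 hdl] := heq eps eps0.
have dl20 : 0 < dl / 2 by rewrite divr_gt0.
have [s hs] := finite_net (dl / 2) dl20.
have : forall c : X, exists o : option X,
    (forall x, o = Some x -> K x /\ d c x < dl / 2) /\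
    (o = None -> forall x, K x -> ~ d c x < dl / 2).
  move=> c; case: (pselect (exists x, K x /\ d c x < dl / 2)) => [[x hx]|nh].
    by exists (Some x); split => // y [<-].
  by exists None; split => // _ x Kx hx; apply: nh; exists x.
move=> /choice [g hg].
exists (maxn (size (pmap g s)) 1); split; first by rewrite leq_max orbT.
move=> n n1; apply: leq_trans (leq_maxl _ _); apply: spanhat_le.
exists (pmap g s); split => //.
have mU := open_meas (Uopen n eps (pmap g s)).
rewrite prE // lte_fin; apply: (lt_le_trans (y := P K)); first by move: hK; rewrite prE // lte_fin.
apply: pr_mono => // y Ky.
have [c [cs cy]] := hs y.
case ec : (g c) => [x|].
  have [Kx cx] := (hg c).1 x ec.
  exists x; split; first exact: in_pmap cs ec.
  rewrite /Bhat /=; apply: hdl => //; have := d_tri x c y; rewrite d_sym in cx; lra.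
by exfalso; apply: ((hg c).2 ec y Ky).
Qed.
Lemma fcont_d c : fcont (d c).
Proof.
move=> y0 e e0; exists e => // y hy.
have := d_tri c y0 y; have := d_tri c y y0; rewrite (d_sym y y0).
move=> h1 h2; rewrite ltr_norml; apply/andP; split; lra.
Qed.

Lemma In_map (f : X -> set X) (s : list X) c : List.In c s -> List.In (f c) (map f s).
Proof. by elim: s => [|a s ih] //= [<-|h]; [left|right; apply: ih]. Qed.

Lemma In_map_inv (f : X -> set X) (s : list X) C : List.In C (map f s) ->
  exists c, List.In c s /\ C = f c.
Proof.
elim: s => [|a s ih] //= [<-|/ih [c [cs ->]]]; first by exists a; split => //; left.
by exists c; split => //; right.
Qed.

Lemma meas_tail N x0 e' : measurable [set y | forall n, (N <= n)%N -> db n x0 y < e'].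
Proof.
have -> : [set y | forall n, (N <= n)%N -> db n x0 y < e'] =
    \bigcap_n [set y | (N <= n)%N -> db n x0 y < e'].
  apply/seteqP; split => y /=; first by move=> h n _ hn; exact: h n hn.
  by move=> h n hn; exact: h n I hn.
apply: bigcapT_measurable => n; case: (leqP N n) => hn.
  have -> : [set y | true -> db n x0 y < e'] = [set y | db n x0 y < e'].
    by apply/seteqP; split => y /=; [move=> h; exact: h | move=> h _].
  exact: open_meas (fcont_lt_open (db n x0) e' (db_cont n x0)).
have -> : [set y | false -> db n x0 y < e'] = setT.
  by apply/seteqP; split => y //= _ h.
exact: measurableT.
Qed.

Lemma step3 (K0 : set X) : measurable K0 -> mean_equicontinuous d T K0 ->
  forall L, measurable L -> L `<=` K0 -> forall e b, 0 < e -> 0 < b ->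
  exists L', [/\ measurable L', L' `<=` L, P L - b < P L' & good e L'].
Proof.
move=> mK0 hK0 L mL LK0 e b e0 b0.
pose e' := e / 2; have e'0 : 0 < e' by rewrite divr_gt0.
have [dl0 dl00 hdl0] := hK0 e' e'0.
have r0 : 0 < dl0 / 4 by rewrite divr_gt0.
have [s hs] := finite_net _ r0.
pose f (c : X) := [set y | d c y <= dl0 / 4].
apply: (@AL L e (map f s) b mL) => //.
- move=> C /In_map_inv [c [cs ->]]; exact: (fcont_le_closed (d c) (dl0 / 4) (fcont_d c)).
- move=> y Ly; have [c [cs cy]] := hs y; exists (f c); split; first exact: In_map.
  by rewrite /f /=; apply: ltW.
move=> C /In_map_inv [c [cs ->]] b' b'0.
have mC : measurable (f c) by apply: closed_meas; exact: (fcont_le_closed (d c) (dl0 / 4) (fcont_d c)).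
case: (pselect (exists x0, L x0 /\ f c x0)) => [[x0 [Lx0 Cx0]]|nx]; last first.
  exists setT; split => //; first by rewrite setDT pr0.
  by exists 1 => // n y y' _ Ly _ Cy; exfalso; apply: nx; exists y.
pose F N := [set y | forall n, (N <= n)%N -> db n x0 y < e'].
pose A N := L `&` f c `&` F N.
have mA N : measurable (A N) by apply: measurableI; [exact: measurableI|exact: meas_tail].
have Ainc : forall n m, (n <= m)%N -> A n `<=` A m.
  by move=> n m nm y [Ly hy]; split => // k mk; apply: hy; exact: leq_trans nm mk.
have [N hN] := pr_incr mu A mA Ainc _ b'0.
have sub : L `&` f c `<=` \bigcup_n A n.
  move=> y [Ly Cy].
  have hxy : d x0 y < dl0.
    have := d_tri x0 c y; rewrite /f /= d_sym in Cx0; move: Cy; rewrite /f /=; lra.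
  have [N' hN'] := esup_lt _ _ (hdl0 x0 y (LK0 x0 Lx0) (LK0 y Ly) hxy).
  by exists N' => //; split => // n hn; rewrite -lte_fin; apply: hN'.
have mLC : measurable (L `&` f c) by exact: measurableI.
have mU : measurable (\bigcup_n A n) by exact: bigcupT_measurable.
exists (F N); split; first exact: meas_tail.
  have hD := @pr_disjU _ _ _ mu (L `&` f c `\` F N) (A N) (measurableD mLC (meas_tail N x0 e')) (mA N).
  have eU : (L `&` f c `\` F N) `|` A N = L `&` f c.
    apply/seteqP; split => y; first by case => [[]|[]].
    by move=> hy; case: (pselect (F N y)) => hF; [right|left].
  have eI : (L `&` f c `\` F N) `&` A N = set0.
    by apply/seteqP; split => // y [[_ nF] [_ hF]].
  rewrite eU in hD; have := hD eI.
  have := pr_mono mu mLC mU sub; lra.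
have [r rpos hr] := iters_ucont N e' e'0.
exists r => // n y y' n1 Ly Ly' Cy Cy' Fy Fy' yy'.
apply: dh_lt => // k /andP[k1 kn].
case: (leqP N k) => Nk.
  have := db_tri k y x0 y'; rewrite (db_sym k y x0); have := Fy k Nk; have := Fy' k Nk.
  rewrite /e'; lra.
have : db k y y' < e'.
  apply: db_lt => // i ik; apply: hr => //; exact: ltn_trans ik Nk.
rewrite /e'; lra.
Qed.

Lemma three_two : mu_mean_equicontinuous d T mu -> mu_equicontinuous_in_mean d T mu.
Proof.
move=> h tau tau0; have [K0 [mK0 hK0 heq]] := h tau tau0.
apply: (@nest K0 tau mK0); first by move: hK0; rewrite prE // lte_fin.
exact: step3.
Qed.
Lemma span_exists n eps : 0 < eps -> exists k, span_ok d T mu n eps k.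
Proof.
move=> eps0.
have [x|s hs] := @dcomp X (fun x => Bhat d T n x eps) (fun x => Bhat_open n x eps).
  by exists x; rewrite /Bhat /= dh_xx.
exists (size s), s; split => //.
have -> : [set y | exists x, List.In x s /\ Bhat d T n x eps y] = setT.
  by apply/seteqP; split => // y _; have [x [xs hx]] := hs y; exists x.
rewrite probability_setT lte_fin; lra.
Qed.

Lemma spanhat_ok n eps : 0 < eps -> span_ok d T mu n eps (spanhat d T mu n eps).
Proof.
move=> eps0; rewrite /spanhat; case: pselect => [h|h]; last first.
  by exfalso; apply: h; exact: span_exists.
by case: ex_minnP => m /asboolP.
Qed.

Definition lunion (F : list X) (Q : X -> Prop) (B : X -> set X) :=
  [set y | exists x, List.In x F /\ Q x /\ B x y].

Lemma lunion_meas F Q B : (forall x, measurable (B x)) -> measurable (lunion F Q B).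
Proof.
move=> mB; elim: F => [|a F ih].
  have -> : lunion [::] Q B = set0 by apply/seteqP; split => // y [x []].
  exact: measurable0.
have -> : lunion (a :: F) Q B = [set y | Q a /\ B a y] `|` lunion F Q B.
  apply/seteqP; split => y.
    by move=> [x [[<-|xF] [Qx Bx]]]; [left|right; exists x].
  by case => [[Qa Ba]|[x [xF hx]]]; [exists a; split => //; left|exists x; split => //; right].
apply: measurableU => //; case: (pselect (Q a)) => Qa.
  by have -> : [set y | Q a /\ B a y] = B a by apply/seteqP; split => y //= [].
by have -> : [set y | Q a /\ B a y] = set0 by apply/seteqP; split => y //= [].
Qed.

Lemma lunion_small F Q B c : (forall x, measurable (B x)) -> 0 <= c ->
  (forall x, Q x -> P (B x) <= c) -> P (lunion F Q B) <= (size F)%:R * c.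
Proof.
move=> mB c0 hB; elim: F => [|a F ih].
  have -> : lunion [::] Q B = set0 by apply/seteqP; split => // y [x []].
  by rewrite pr0 mul0r.
have sub : lunion (a :: F) Q B `<=` [set y | Q a /\ B a y] `|` lunion F Q B.
  by move=> y [x [[<-|xF] [Qx Bx]]]; [left|right; exists x].
have mQa : measurable [set y | Q a /\ B a y].
  case: (pselect (Q a)) => Qa.
    by have -> : [set y | Q a /\ B a y] = B a by apply/seteqP; split => y //= [].
  by have -> : [set y | Q a /\ B a y] = set0 by apply/seteqP; split => y //= [].
have h1 : P [set y | Q a /\ B a y] <= c.
  case: (pselect (Q a)) => Qa.
    have -> : [set y | Q a /\ B a y] = B a by apply/seteqP; split => y //= [].
    exact: hB.
  have -> : [set y | Q a /\ B a y] = set0 by apply/seteqP; split => y //= [].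
  by rewrite pr0.
have mU := lunion_meas F Q B mB.
have := pr_mono mu (lunion_meas (a :: F) Q B mB) (measU mQa mU) sub.
have := pr_U mu mQa mU; rewrite /= -addn1 natrD mulrDl mul1r; lra.
Qed.
Definition sep rho a b := exists N, 2 * rho <= dh N a b.

Fixpoint sepl rho (s : list X) : Prop :=
  match s with [::] => True | a :: s' => (forall b, List.In b s' -> sep rho a b) /\ sepl rho s' end.

Lemma sep_common rho a s : (forall b, List.In b s -> sep rho a b) ->
  exists N, forall b, List.In b s -> forall n, (N <= n)%N -> 2 * rho <= dh n a b.
Proof.
elim: s => [|c s ih] h; first by exists 0%N.
have [N1 h1] := ih (fun b hb => h b (or_intror hb)).
have [N2 h2] := h c (or_introl erefl).
exists (maxn N1 N2) => b [<-|hb] n hn.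
  by apply: (le_trans h2); apply: dh_mono; exact: leq_trans (leq_maxr _ _) hn.
by apply: h1 => //; exact: leq_trans (leq_maxl _ _) hn.
Qed.

Lemma sepl_measure rho b0 (Wl : set X) :
  (forall y, Wl y -> forall n, (1 <= n)%N -> b0 <= P (Bhat d T n y rho)) ->
  forall s, sepl rho s -> (forall y, List.In y s -> Wl y) ->
  exists N0, forall N, (N0 <= N)%N ->
    (size s)%:R * b0 <= P (lunion s (fun _ => True) (fun a => Bhat d T N a rho)).
Proof.
move=> hW; elim => [|a s ih] /=.
  by move=> _ _; exists 0%N => N _; rewrite mul0r pr_ge0.
move=> [hsep hs] hin.
have [N1 h1] := ih hs (fun y hy => hin y (or_intror hy)).
have [N2 h2] := @sep_common rho a s hsep.
exists (maxn (maxn N1 N2) 1) => N hN.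
have hN1 : (N1 <= N)%N by apply: leq_trans hN; rewrite leq_max leq_max leqnn.
have hN2 : (N2 <= N)%N by apply: leq_trans hN; rewrite leq_max leq_max leqnn orbT.
have hN3 : (1 <= N)%N by apply: leq_trans hN; rewrite leq_max leqnn orbT.
have mB x : measurable (Bhat d T N x rho) by apply: open_meas; exact: Bhat_open.
have mU := lunion_meas s (fun _ => True) _ mB.
have eU : lunion (a :: s) (fun _ => True) (fun a => Bhat d T N a rho) =
    Bhat d T N a rho `|` lunion s (fun _ => True) (fun a => Bhat d T N a rho).
  apply/seteqP; split => y.
    by move=> [x [[<-|xF] [_ Bx]]]; [left|right; exists x].
  by case => [Ba|[x [xF hx]]]; [exists a; split => //; left|exists x; split => //; right].
have eI : Bhat d T N a rho `&` lunion s (fun _ => True) (fun a => Bhat d T N a rho) = set0.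
  apply/seteqP; split => // z [hz [x [xs [_ hx]]]].
  have := h2 x xs N hN2; have := dh_tri N a z x; rewrite (dh_sym N z x); rewrite /Bhat /= in hz hx; lra.
rewrite eU (pr_disjU mu (mB a) mU eI) -addn1 natrD mulrDl mul1r.
have := h1 N hN1; have : b0 <= P (Bhat d T N a rho) by apply: hW => //; apply: hin; left.
lra.
Qed.

Lemma max_sep rho b0 (Wl : set X) : 0 < b0 ->
  (forall y, Wl y -> forall n, (1 <= n)%N -> b0 <= P (Bhat d T n y rho)) ->
  exists S, [/\ forall y, List.In y S -> Wl y, sepl rho S &
    forall y, Wl y -> exists s, List.In s S /\ forall n, dh n s y < 2 * rho].
Proof.
move=> b00 hW.
pose ok k := `[< exists S, [/\ size S = k, forall y, List.In y S -> Wl y & sepl rho S] >].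
have ex0 : exists k, ok k by exists 0%N; apply/asboolP; exists [::].
have ub : forall k, ok k -> (k <= Num.Def.archi_bound (b0^-1))%N.
  move=> k /asboolP [S [<- hS hsep]].
  have [N0 hN0] := @sepl_measure rho b0 Wl hW S hsep hS.
  have h := hN0 N0 (leqnn N0).
  have mB x : measurable (Bhat d T N0 x rho) by apply: open_meas; exact: Bhat_open.
  have := pr_le1 mu (lunion_meas S (fun _ => True) _ mB).
  have ib : 0 <= b0^-1 by rewrite invr_ge0 ltW.
  have := archi_boundP ib.
  move=> hA h1; apply: ltnW; rewrite -(ltr_nat R).
  apply: le_lt_trans hA; rewrite -(ler_pM2r b00) mulVf ?gt_eqF //; exact: le_trans h h1.
case: (ex_maxnP ex0 ub) => k /asboolP [S [eS hS hsep]] hmax.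
exists S; split => // y Wy; apply: contrapT => hn.
have hsy : forall s, List.In s S -> sep rho y s.
  move=> s sS; case: (pselect (forall n, dh n s y < 2 * rho)) => [h|h].
    by exfalso; apply: hn; exists s.
  move: h; rewrite -existsNE => -[n hn']; exists n; rewrite dh_sym.
  by rewrite leNgt; apply/negP.
have : ok k.+1 by apply/asboolP; exists (y :: S); split => //=; [rewrite eS|move=> z [<-|/hS]].
by move=> /hmax; rewrite ltnn.
Qed.
Lemma lunion_open F Q B : (forall x, d_open d (B x)) -> d_open d (lunion F Q B).
Proof.
move=> hB y [x [xF [Qx Bxy]]]; have [r r0 hr] := hB x y Bxy.
by exists r => // z /hr hz; exists x.
Qed.

Lemma step1 : bounded_complexity d T mu ->
  forall L, measurable L -> L `<=` setT -> forall e b, 0 < e -> 0 < b ->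
  exists L', [/\ measurable L', L' `<=` L, P L - b < P L' & good e L'].
Proof.
move=> hbc L mL _ e b e0 b0.
pose eps := Num.min (e / 10) (b / 4).
have eps0 : 0 < eps by rewrite lt_min !divr_gt0.
have epse : eps <= e / 10 by rewrite ge_min lexx.
have epsb : eps <= b / 4 by rewrite ge_min lexx orbT.
have [C [C0 hC]] := hbc eps eps0.
pose b1 := b / 4 / C%:R.
have b10 : 0 < b1 by rewrite !divr_gt0 // ltr0n.
pose B n x := Bhat d T n x eps.
have oB n x : d_open d (B n x) by exact: Bhat_open.
have mB n x : measurable (B n x) by exact: open_meas.
have : forall n : nat, exists F : list X, (1 <= n)%N ->
    (size F <= C)%N /\ 1 - eps < P (lunion F (fun _ => True) (B n)).
  move=> n; case: (leqP 1 n) => n1; last by exists [::].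
  have [F [sF hF]] := spanhat_ok n eps eps0.
  exists F => _; split; first by rewrite sF; exact: hC.
  have -> : lunion F (fun _ => True) (B n) =
      [set y | exists x, List.In x F /\ Bhat d T n x eps y].
    by apply/seteqP; split => y [x [xF hx]]; exists x; [case: hx|].
  by rewrite -lte_fin -prE //; apply: open_meas; exact: Uopen.
move=> /choice [Fs hFs].
pose W n := lunion (Fs n) (fun x => b1 <= P (B n x)) (B n).
have oW n : d_open d (W n) by exact: lunion_open.
have PW n : (1 <= n)%N -> 1 - eps - b / 4 <= P (W n).
  move=> n1; have [sF hF] := hFs n n1.
  pose Sm := lunion (Fs n) (fun x => P (B n x) < b1) (B n).
  have mSm : measurable Sm by exact: lunion_meas.
  have mU : measurable (lunion (Fs n) (fun _ => True) (B n)) by exact: lunion_meas.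
  have sub : lunion (Fs n) (fun _ => True) (B n) `<=` W n `|` Sm.
    move=> y [x [xF [_ hx]]]; case: (leP b1 (P (B n x))) => hb.
      by left; exists x.
    by right; exists x.
  have := pr_mono mu mU (measU (open_meas (oW n)) mSm) sub.
  have := pr_U mu (open_meas (oW n)) mSm.
  have hS : P Sm <= (size (Fs n))%:R * b1.
    by apply: lunion_small => // [|x /ltW //]; exact: ltW.
  have : (size (Fs n))%:R * b1 <= C%:R * b1 by rewrite ler_wpM2r ?ler_nat // ltW.
  have : C%:R * b1 = b / 4 by rewrite /b1 mulrCA divff ?mulr1 // pnatr_eq0 -lt0n.
  lra.
pose V N := [set y | exists n, [/\ (N <= n)%N, (1 <= n)%N & W n y]].
have oV N : d_open d (V N).
  move=> y [n [Nn n1 Wy]]; have [r r0 hr] := oW n y Wy.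
  by exists r => // z /hr hz; exists n.
have mV N : measurable (V N) by exact: open_meas.
have Vdec : forall n m, (n <= m)%N -> V m `<=` V n.
  by move=> n m nm y [k [mk k1 Wk]]; exists k; split => //; exact: leq_trans nm mk.
have PV N : 1 - eps - b / 4 <= P (V N).
  apply: le_trans (PW (maxn N 1) (leq_maxr _ _)) _.
  apply: (pr_mono mu (open_meas (oW _)) (mV N)) => y Wy; exists (maxn N 1); split => //; first exact: leq_maxl.
  exact: leq_maxr.
pose Wl := \bigcap_N V N.
have mWl : measurable Wl by exact: bigcapT_measurable.
have [M hM] := pr_decr mu V mV Vdec _ eps0.
have PWl : 1 - 2 * eps - b / 4 < P Wl by have := PV M; lra.
have hWl : forall y, Wl y -> forall n, (1 <= n)%N -> b1 <= P (Bhat d T n y (2 * eps)).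
  move=> y Wy n n1; have [n' [nn' n'1 [x [xF [hbx hx]]]]] := Wy n I.
  apply: (le_trans hbx); apply: pr_mono => //; first by apply: open_meas; exact: Bhat_open.
  move=> z hz; rewrite /Bhat /=; apply: (le_lt_trans (dh_mono n n' y z nn')).
  have := dh_tri n' y x z; rewrite (dh_sym n' y x); rewrite /B /Bhat /= in hx hz; lra.
have [S [hS hsep hcov]] := @max_sep (2 * eps) b1 Wl b10 hWl.
pose D (s : X) := [set z | forall n, dh n s z <= 2 * (2 * eps)].
have cD s : d_closed (D s).
  have -> : D s = \bigcap_n [set z | dh n s z <= 2 * (2 * eps)].
    by apply/seteqP; split => z /= h n; [move=> _|move: (h n I)]; [apply: h|].
  by apply: closed_bigcap => n; exact: fcont_le_closed (dh_cont n s).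
have b40 : 0 < b / 4 by rewrite divr_gt0.
have hCs : forall C1, List.In C1 (map D S) -> d_closed C1.
  by move=> C1 /In_map_inv [c [_ ->]]; exact: cD.
have mLW : measurable (L `&` Wl) by exact: measurableI.
have hcov2 : forall y, (L `&` Wl) y -> exists C1, List.In C1 (map D S) /\ C1 y.
  move=> y [Ly Wy]; have [s [sS hs]] := hcov y Wy.
  by exists (D s); split; [exact: In_map|move=> n; exact: ltW].
have hpg : forall C1, List.In C1 (map D S) -> pergood (L `&` Wl) e C1.
  move=> C1 /In_map_inv [s [sS ->]] b' b'0; exists setT; split => //.
    by rewrite setDT pr0.
  exists 1 => // n y y' _ _ _ Dy Dy' _ _ _.
  have := dh_tri n y s y'; rewrite (dh_sym n y s); have := Dy n; have := Dy' n; lra.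
have [L' [mL' L'sub PL' gL']] := @AL (L `&` Wl) e (map D S) (b / 4) mLW hCs hcov2 hpg b40.
exists L'; split => //; first by move=> y /L'sub [].
have sub : L `<=` (L `&` Wl) `|` ~` Wl.
  by move=> y Ly; case: (pselect (Wl y)) => h; [left|right].
have := pr_mono mu mL (measU mLW (measurableC mWl)) sub.
have := pr_U mu mLW (measurableC mWl); rewrite (pr_setC mu mWl); lra.
Qed.

Lemma one_two : bounded_complexity d T mu -> mu_equicontinuous_in_mean d T mu.
Proof.
move=> h tau tau0; apply: (@nest setT tau measurableT); first by rewrite prT; lra.
exact: step1.
Qed.
End Main.

Theorem mainTheorem8 (R : realType) (dX : measure_display) (X : measurableType dX)
  (d : X -> X -> R) (T : X -> X) (mu : probability X R) :
  is_metric d ->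
  d_compact d ->
  d_continuous d T ->
  @measurable _ X = <<s d_open d >> ->
  (forall A : set X, measurable A -> mu (T @^-1` A) = mu A) ->
  (bounded_complexity d T mu <-> mu_equicontinuous_in_mean d T mu) /\
  (mu_equicontinuous_in_mean d T mu <-> mu_mean_equicontinuous d T mu).
Proof.
move=> dmet dcomp Tcont meas_eq _; split; split.
- exact: (one_two d T mu dmet dcomp Tcont meas_eq).
- exact: (two_one d T mu dmet dcomp Tcont meas_eq).
- exact: (two_three d T mu).
- exact: (three_two d T mu dmet dcomp Tcont meas_eq).
Qed.
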